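(* For a regular dimension-reduced canonical form, the infimal value $\underline L^*$ and solution set $\widehat W$ are as follows. (a) If the problem is non-Lagrangian, then $W_\circ=W_1=\emptyset$, $W=\{0_q\}$, and $\underline L^*=\sum_{i=1}^q\gamma_i^{-2}l_i^2>0$ is attained on $\widehat W=\{0_q\}$. (b) If it is multiply-Lagrangian, then $\underline L^*=0$, attained on $\widehat W=W_\circ=W_1=\{0_q\}$, and also $W_q=\{0_q\}$ when $\gamma_q<0$. (c) If it is singly-Lagrangian, then $\widehat W$ is the unique nonempty member of $\{W_\circ,W_1,W_q\}$ (with $W_q$ considered only if $\gamma_q<0$). Specifically: if $\gamma_q>0$, then $\underline f<0$, and $\widehat W=W_\circ$ if $\overline f>0$, $\widehat W=W_1$ if $\overline f\le0$; if $\gamma_q<0$, then $\widehat W=W_\circ$, $W_1$ or $W_q$ according as $\underline f<0<\overline f$, $\overline f\le0$, or $\underline f\ge0$. When $\widehat W=W_\circ$: $\underline L^*=\hat\lambda^2\{l_0^2+\sum_{i=1}^q(1-\hat\lambda\gamma_i)^{-2}l_i^2\}$, attained uniquely at $w=w(\hat\lambda)$, where $\hat\lambda$ is the unique solution of $f(\lambda)=0$ in $\Lambda^\circ$. When $\widehat W=W_1$: $\underline L^*=\gamma_1^{-2}\{l_0^2+\sum_{i=2}^q(1-\gamma_i/\gamma_1)^{-2}l_i^2\}+\zeta_1^2$, attained at $w=(\hat y_1,\pm\zeta_1,\hat z_{(1)}^\top)^\top$, where $\zeta_1=\sqrt{-f_1/\gamma_1}\ge0$. When $\widehat W=W_q$: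 $\underline L^*=\gamma_q^{-2}\{l_0^2+\sum_{i=1}^{q-1}(1-\gamma_i/\gamma_q)^{-2}l_i^2\}+\zeta_q^2$, attained at $w=(\hat y_q,\hat z_{(q)}^\top,\pm\zeta_q)^\top$, where $\zeta_q=\sqrt{f_q/(-\gamma_q)}\ge0$. (Coordinates $\hat y_1,\hat y_q$ are absent when $m_0=0$.)
   Context: Regular dimension-reduced canonical form: $q\ge1$, $\gamma_1>\dots>\gamma_q$ nonzero reals with $\gamma_1>0$, $\Gamma^*=\operatorname{diag}(\gamma_1,\dots,\gamma_q)$, $\delta=(\delta_i)$ with $\delta_i\ge0$, $k^*\in\mathbb{R}$, $\varepsilon\ge0$; either ($m_0=0$) $\varepsilon=0$, $w=z\in\mathbb{R}^q$, $w_0=\delta$, $\Delta=\Gamma^*$, $d=0$; or ($m_0>0$) $\varepsilon>0$, $w=(y,z^\top)^\top\in\mathbb{R}^{q+1}$, $w_0=(0,\delta^\top)^\top$, $\Delta=\operatorname{diag}(0,\Gamma^* )$, $d=\varepsilon e_1$. Problem: minimise $L^*(w)=\|w-w_0\|^2$ over $W=\{w:Q^*(w)=0\}\neq\emptyset$, $Q^*(w)=w^\top\Delta w+2d^\top w-k^*$; $\underline L^*=\inf_WL^*$, $\widehat W$ the set of minimisers. Let $l_0=\varepsilon$ and $l_i=|\gamma_i|\delta_i$. Admissible region $\Lambda=(-\infty,\gamma_1^{-1}]$ if $\gamma_q>0$, $[\gamma_q^{-1},\gamma_1^{-1}]$ if $\gamma_q<0$; $\Lambda^\circ$ its interior. $W(\lambda)$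 is the set of $w\in W$ with $(I-\lambda\Delta)w=w_0+\lambda d$; $W_\circ=\bigcup_{\lambda\in\Lambda^\circ}W(\lambda)$, $W_1=W(\gamma_1^{-1})$, and (only if $\gamma_q<0$) $W_q=W(\gamma_q^{-1})$. For $\lambda\in\Lambda^\circ$: $w(\lambda)=(I-\lambda\Delta)^{-1}(w_0+\lambda d)$, $f(\lambda)=\sum_{i=1}^q(1-\lambda\gamma_i)^{-2}\gamma_i\delta_i^2+2\varepsilon^2\lambda-k^*$; $\underline f=\inf_{\Lambda^\circ}f$, $\overline f=\sup_{\Lambda^\circ}f$. Boundary quantities: $\hat y_1=\varepsilon\gamma_1^{-1}$, $\hat z_{(1)}\in\mathbb{R}^{q-1}$ with entries $(1-\gamma_i/\gamma_1)^{-1}\delta_i$ ($i=2,\dots,q$), $f_1=\sum_{i=2}^q\gamma_i(\hat z_{(1)})_i^2+2\varepsilon\hat y_1-k^*$; when $\gamma_q<0$: $\hat y_q=\varepsilon\gamma_q^{-1}$, $\hat z_{(q)}$ with entries $(1-\gamma_i/\gamma_q)^{-1}\delta_i$ ($i=1,\dots,q-1$), $f_q=\sum_{i=1}^{q-1}\gamma_i(\hat z_{(q)})_i^2+2\varepsilon\hat y_q-k^*$. The problem is non-Lagrangian if $m_0=0$, $k^*=0$, $\delta\neq0_q$ and $\gamma_q>0$; multiply-Lagrangian if $m_0=0$, $k^*=0$ and $\delta=0_q$; singly-Lagrangian otherwise. *)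

(* Defs.v *)
From Stdlib Require Import Reals List Arith.
Open Scope R_scope.

(* sumR f a b = f a + f (a+1) + ... + f b   (0 if b < a) *)
Definition sumR (f : nat -> R) (a b : nat) : R :=
  fold_right (fun i acc => f i + acc) 0 (seq a (S b - a)).

(* Data of a dimension-reduced canonical form.
   gam i, del i are meaningful for 1 <= i <= nq; eps is epsilon;
   m0pos = true  <-> m0 > 0. *)
Record CF := mkCF {
  nq : nat; gam : nat -> R; del : nat -> R; kst : R; eps : R; m0pos : bool }.

(* Vectors w: coordinate 0 is y (present only if m0 > 0),
   coordinates 1..nq are z_1..z_q; all other coordinates are 0. *)
Definition vec := nat -> R.

Definition inRange (c : CF) (i : nat) : Prop := (1 <= i <= nq c)%nat.

Definition inspace (c : CF) (w : vec) : Prop :=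
  (m0pos c = false -> w 0%nat = 0) /\ (forall i, (nq c < i)%nat -> w i = 0).

Definition w0 (c : CF) : vec :=
  fun i => if andb (1 <=? i)%nat (i <=? nq c)%nat then del c i else 0.

Definition DeltaC (c : CF) (i : nat) : R :=
  if andb (1 <=? i)%nat (i <=? nq c)%nat then gam c i else 0.
Definition dC (c : CF) (i : nat) : R := if (i =? 0)%nat then eps c else 0.

Definition Lst (c : CF) (w : vec) : R :=
  sumR (fun i => (w i - w0 c i) ^ 2) 0 (nq c).
Definition Qst (c : CF) (w : vec) : R :=
  sumR (fun i => gam c i * (w i) ^ 2) 1 (nq c) + 2 * (eps c * w 0%nat) - kst c.

Definition inW (c : CF) (w : vec) : Prop := inspace c w /\ Qst c w = 0.

Definition infL (c : CF) (x : R) : Prop :=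
  (forall w, inW c w -> x <= Lst c w) /\
  (forall y, (forall w, inW c w -> y <= Lst c w) -> y <= x).

Definition What (c : CF) (w : vec) : Prop :=
  inW c w /\ forall v, inW c v -> Lst c w <= Lst c v.

Definition regular (c : CF) : Prop :=
  (1 <= nq c)%nat /\
  (forall i j, (1 <= i)%nat -> (i < j)%nat -> (j <= nq c)%nat -> gam c j < gam c i) /\
  (forall i, inRange c i -> gam c i <> 0) /\
  0 < gam c 1 /\
  (forall i, inRange c i -> 0 <= del c i) /\
  0 <= eps c /\
  (m0pos c = false -> eps c = 0) /\
  (m0pos c = true -> 0 < eps c) /\
  (exists w, inW c w).

Definition inLamo (c : CF) (lam : R) : Prop :=
  (0 < gam c (nq c) -> lam < / gam c 1) /\
  (gam c (nq c) < 0 -> / gam c (nq c) < lam < / gam c 1).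

Definition Wlam (c : CF) (lam : R) (w : vec) : Prop :=
  inW c w /\
  forall i, (i <= nq c)%nat ->
    w i - lam * (DeltaC c i * w i) = w0 c i + lam * dC c i.

Definition Wcirc (c : CF) (w : vec) : Prop :=
  exists lam, inLamo c lam /\ Wlam c lam w.
Definition W1 (c : CF) : vec -> Prop := Wlam c (/ gam c 1).
Definition Wq (c : CF) : vec -> Prop := Wlam c (/ gam c (nq c)).

Definition wlam (c : CF) (lam : R) : vec :=
  fun i => if (i =? 0)%nat then lam * eps c
           else if (i <=? nq c)%nat then del c i / (1 - lam * gam c i) else 0.

Definition fC (c : CF) (lam : R) : R :=
  sumR (fun i => gam c i * (del c i) ^ 2 / (1 - lam * gam c i) ^ 2) 1 (nq c)
  + 2 * (eps c) ^ 2 * lam - kst c.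

Definition lC (c : CF) (i : nat) : R :=
  if (i =? 0)%nat then eps c else Rabs (gam c i) * del c i.

(* boundary quantities at lambda = 1/gam_1 *)
Definition yhat1 (c : CF) : R := eps c / gam c 1.
Definition zhat1 (c : CF) (i : nat) : R := del c i / (1 - gam c i / gam c 1).
Definition f1 (c : CF) : R :=
  sumR (fun i => gam c i * (zhat1 c i) ^ 2) 2 (nq c) + 2 * (eps c * yhat1 c) - kst c.
Definition zeta1 (c : CF) : R := sqrt (- f1 c / gam c 1).
Definition v1 (c : CF) (sgn : R) : vec :=
  fun i => if (i =? 0)%nat then yhat1 c
           else if (i =? 1)%nat then sgn * zeta1 c
           else if (i <=? nq c)%nat then zhat1 c i else 0.

(* boundary quantities at lambda = 1/gam_q *)
Definition yhatq (c : CF) : R := eps c / gam c (nq c).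
Definition zhatq (c : CF) (i : nat) : R := del c i / (1 - gam c i / gam c (nq c)).
Definition fq (c : CF) : R :=
  sumR (fun i => gam c i * (zhatq c i) ^ 2) 1 (nq c - 1) + 2 * (eps c * yhatq c) - kst c.
Definition zetaq (c : CF) : R := sqrt (fq c / (- gam c (nq c))).
Definition vq (c : CF) (sgn : R) : vec :=
  fun i => if (i =? 0)%nat then yhatq c
           else if (i =? nq c)%nat then sgn * zetaq c
           else if (i <? nq c)%nat then zhatq c i else 0.

Definition set_eq (A B : vec -> Prop) : Prop := forall w, A w <-> B w.
Definition single (v : vec) : vec -> Prop := fun w => forall i, w i = v i.
Definition nonempty (A : vec -> Prop) : Prop := exists w, A w.
Definition emptyS (A : vec -> Prop) : Prop := forall w, ~ A w.
Definition zerov : vec := fun _ => 0.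

Definition nonLag (c : CF) : Prop :=
  m0pos c = false /\ kst c = 0 /\ (exists i, inRange c i /\ del c i <> 0)
  /\ 0 < gam c (nq c).
Definition multLag (c : CF) : Prop :=
  m0pos c = false /\ kst c = 0 /\ (forall i, inRange c i -> del c i = 0).
Definition singLag (c : CF) : Prop := ~ nonLag c /\ ~ multLag c.

(* Main.v *)
Require Import Defs.
From Stdlib Require Import Reals List Arith Lra Lia Psatz FunctionalExtensionality Classical.
Open Scope R_scope.

Definition lsum (f : nat -> R) (l : list nat) := fold_right (fun i acc => f i + acc) 0 l.

Lemma sumR_lsum f a b : sumR f a b = lsum f (seq a (S b - a)).
Proof. reflexivity. Qed.

Lemma in_range a b i : In i (seq a (S b - a)) <-> (a <= i <= b)%nat.
Proof. rewrite in_seq. lia. Qed.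

Lemma lsum_app f l1 l2 : lsum f (l1 ++ l2) = lsum f l1 + lsum f l2.
Proof. induction l1; simpl; [ring | rewrite IHl1; ring]. Qed.

Lemma lsum_ext f g l : (forall i, In i l -> f i = g i) -> lsum f l = lsum g l.
Proof.
  induction l; simpl; intros H; auto.
  rewrite H by auto. rewrite IHl by auto. reflexivity.
Qed.

Lemma lsum_le f g l : (forall i, In i l -> f i <= g i) -> lsum f l <= lsum g l.
Proof.
  induction l; simpl; intros H; [lra|].
  pose proof (H a (or_introl eq_refl)). pose proof (IHl (fun i Hi => H i (or_intror Hi))). lra.
Qed.

Lemma lsum_comb f g h k lam l :
  lsum f l - lsum g l - lam * (lsum h l - lsum k l) =
  lsum (fun i => f i - g i - lam * (h i - k i)) l.
Proof. induction l; simpl; [ring|]. rewrite <- IHl. ring. Qed.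

Lemma lsum_scal f cst l : cst * lsum f l = lsum (fun i => cst * f i) l.
Proof. induction l; simpl; [ring|]. rewrite <- IHl. ring. Qed.

Lemma lsum_nonneg f l : (forall i, In i l -> 0 <= f i) -> 0 <= lsum f l.
Proof.
  intros H. replace 0 with (lsum (fun _ => 0) l).
  - apply lsum_le. auto.
  - induction l; simpl; auto. rewrite IHl; [ring|]. intros; apply H; simpl; auto.
Qed.

Lemma lsum_zero l : lsum (fun _ => 0) l = 0.
Proof. induction l; simpl; auto. rewrite IHl; ring. Qed.

Lemma lsum_nonneg_zero f l : (forall i, In i l -> 0 <= f i) -> lsum f l = 0 ->
  forall i, In i l -> f i = 0.
Proof.
  induction l; simpl; intros H Hs i Hi; [contradiction|].
  assert (H1 : 0 <= f a) by auto.
  assert (H2 : 0 <= lsum f l) by (apply lsum_nonneg; auto).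
  destruct Hi as [<- | Hi]; [lra|].
  apply IHl; auto; lra.
Qed.

Lemma lsum_pos f l j : (forall i, In i l -> 0 <= f i) -> In j l -> 0 < f j -> 0 < lsum f l.
Proof.
  induction l; simpl; intros H Hj Hfj; [contradiction|].
  assert (H1 : 0 <= f a) by auto.
  assert (H2 : 0 <= lsum f l) by (apply lsum_nonneg; auto).
  destruct Hj as [<- | Hj]; [lra|].
  assert (0 < lsum f l) by (apply IHl; auto). lra.
Qed.

Lemma sumR_ext f g a b : (forall i, (a <= i <= b)%nat -> f i = g i) -> sumR f a b = sumR g a b.
Proof. intros H. rewrite !sumR_lsum. apply lsum_ext. intros i Hi; apply H, in_range; auto. Qed.

Lemma sumR_le f g a b : (forall i, (a <= i <= b)%nat -> f i <= g i) -> sumR f a b <= sumR g a b.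
Proof. intros H. rewrite !sumR_lsum. apply lsum_le. intros i Hi; apply H, in_range; auto. Qed.

Lemma sumR_nonneg f a b : (forall i, (a <= i <= b)%nat -> 0 <= f i) -> 0 <= sumR f a b.
Proof. intros H. rewrite !sumR_lsum. apply lsum_nonneg. intros i Hi; apply H, in_range; auto. Qed.

Lemma sumR_zero a b : sumR (fun _ => 0) a b = 0.
Proof. rewrite sumR_lsum. apply lsum_zero. Qed.

Lemma sumR_nonneg_zero f a b : (forall i, (a <= i <= b)%nat -> 0 <= f i) -> sumR f a b = 0 ->
  forall i, (a <= i <= b)%nat -> f i = 0.
Proof.
  intros H Hs i Hi. rewrite sumR_lsum in Hs.
  apply (lsum_nonneg_zero f (seq a (S b - a))); auto.
  - intros j Hj; apply H, in_range; auto.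
  - apply in_range; auto.
Qed.

Lemma sumR_pos f a b j : (forall i, (a <= i <= b)%nat -> 0 <= f i) -> (a <= j <= b)%nat -> 0 < f j ->
  0 < sumR f a b.
Proof.
  intros H Hj Hf. rewrite sumR_lsum. apply (lsum_pos f _ j); auto.
  - intros i Hi; apply H, in_range; auto.
  - apply in_range; auto.
Qed.

Lemma sumR_comb f g h k lam a b :
  sumR f a b - sumR g a b - lam * (sumR h a b - sumR k a b) =
  sumR (fun i => f i - g i - lam * (h i - k i)) a b.
Proof. rewrite !sumR_lsum. apply lsum_comb. Qed.

Lemma sumR_scal f cst a b : cst * sumR f a b = sumR (fun i => cst * f i) a b.
Proof. rewrite !sumR_lsum. apply lsum_scal. Qed.

Lemma sumR_first f a b : (a <= b)%nat -> sumR f a b = f a + sumR f (S a) b.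
Proof.
  intros H. unfold sumR. replace (S b - a)%nat with (S (S b - S a)) by lia. reflexivity.
Qed.

Lemma sumR_last f a b : (a <= b)%nat -> (1 <= b)%nat -> sumR f a b = sumR f a (b - 1) + f b.
Proof.
  intros H H1. rewrite !sumR_lsum.
  replace (S b - a)%nat with (S (S (b - 1) - a)) by lia.
  rewrite seq_S, lsum_app. replace (a + (S (b - 1) - a))%nat with b by lia. change (lsum f (b :: nil)) with (f b + 0). ring.
Qed.

Section S.
Variable c : CF.
Hypothesis Hreg : regular c.

Lemma n_ge1 : (1 <= nq c)%nat.
Proof. apply Hreg. Qed.

Lemma g1_pos : 0 < gam c 1.
Proof. apply Hreg. Qed.

Lemma gam_nz i : inRange c i -> gam c i <> 0.
Proof. apply Hreg. Qed.

Lemma gam_lt i j : (1 <= i)%nat -> (i < j)%nat -> (j <= nq c)%nat -> gam c j < gam c i.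
Proof. apply Hreg. Qed.

Lemma gam_le1 i : inRange c i -> gam c i <= gam c 1.
Proof.
  intros [H1 H2]. destruct (Nat.eq_dec i 1) as [->|]; [lra|].
  left; apply gam_lt; lia.
Qed.

Lemma gam_lt1 i : inRange c i -> i <> 1%nat -> gam c i < gam c 1.
Proof. intros [H1 H2] Hi. apply gam_lt; lia. Qed.

Lemma gam_geq i : inRange c i -> gam c (nq c) <= gam c i.
Proof.
  intros [H1 H2]. destruct (Nat.eq_dec i (nq c)) as [->|]; [lra|].
  left; apply gam_lt; lia.
Qed.

Lemma gam_ltq i : inRange c i -> i <> nq c -> gam c (nq c) < gam c i.
Proof. intros [H1 H2] Hi. apply gam_lt; lia. Qed.

Lemma inR1 : inRange c 1.
Proof. split; [lia| apply n_ge1]. Qed.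
Lemma inRq : inRange c (nq c).
Proof. split; [apply n_ge1| lia]. Qed.

Lemma del_nn i : inRange c i -> 0 <= del c i.
Proof. apply Hreg. Qed.
Lemma eps_nn : 0 <= eps c.
Proof. apply Hreg. Qed.
Lemma eps_m0 : m0pos c = false -> eps c = 0.
Proof. apply Hreg. Qed.
Lemma eps_m1 : m0pos c = true -> 0 < eps c.
Proof. apply Hreg. Qed.
Lemma W_ne : exists w, inW c w.
Proof. apply Hreg. Qed.

Lemma gq_cases : 0 < gam c (nq c) \/ gam c (nq c) < 0.
Proof. pose proof (gam_nz _ inRq). lra. Qed.

Definition adm lam := forall i, inRange c i -> 0 <= 1 - lam * gam c i.

Lemma Lamo_pos lam : inLamo c lam -> forall i, inRange c i -> 0 < 1 - lam * gam c i.
Proof.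
  intros [Hp Hn] i Hi.
  pose proof (gam_le1 i Hi). pose proof (gam_geq i Hi). pose proof g1_pos.
  assert (Hu : gam c 1 * / gam c 1 = 1) by (field; lra).
  assert (0 < / gam c 1) by (apply Rinv_0_lt_compat; lra).
  destruct (Rlt_or_le 0 (gam c i)).
  - destruct gq_cases as [Hq|Hq]; [specialize (Hp Hq)|specialize (Hn Hq); destruct Hn as [_ Hp2]];
    nra.
  - assert (gam c i <> 0) by (apply gam_nz; auto).
    assert (Hq : gam c (nq c) < 0) by lra. destruct (Hn Hq) as [Hl _].
    assert (Hv : gam c (nq c) * / gam c (nq c) = 1) by (field; lra).
    assert (/ gam c (nq c) < 0) by (apply Rinv_lt_0_compat; lra).
    nra.
Qed.

Lemma adm_Lamo lam : inLamo c lam -> adm lam.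
Proof. intros H i Hi. left. apply Lamo_pos; auto. Qed.

Lemma adm_1 : adm (/ gam c 1).
Proof.
  intros i Hi. pose proof (gam_le1 i Hi). pose proof g1_pos.
  assert (/ gam c 1 * gam c i <= 1); [|lra].
  apply (Rmult_le_reg_l (gam c 1)); [lra|]. field_simplify; lra.
Qed.

Lemma adm_q : gam c (nq c) < 0 -> adm (/ gam c (nq c)).
Proof.
  intros Hq i Hi. pose proof (gam_geq i Hi).
  assert (/ gam c (nq c) * gam c i <= 1); [|lra].
  assert (Hv : gam c (nq c) * / gam c (nq c) = 1) by (field; lra).
  assert (/ gam c (nq c) < 0) by (apply Rinv_lt_0_compat; lra).
  nra.
Qed.

Lemma Lamo_0 : inLamo c 0.
Proof.
  pose proof g1_pos. split; intros Hq.
  - apply Rinv_0_lt_compat; lra.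
  - split; [apply Rinv_lt_0_compat| apply Rinv_0_lt_compat]; lra.
Qed.

Lemma not_Lamo_1 lam : inLamo c lam -> lam <> / gam c 1.
Proof.
  intros [Hp Hn]. destruct gq_cases as [Hq|Hq]; [specialize (Hp Hq)|destruct (Hn Hq)]; lra.
Qed.

Lemma not_Lamo_q lam : inLamo c lam -> lam <> / gam c (nq c).
Proof.
  intros [Hp Hn]. destruct gq_cases as [Hq|Hq].
  - pose proof (Rinv_0_lt_compat _ Hq). pose proof g1_pos.
    specialize (Hp Hq). intros ->.
    pose proof (gam_le1 _ inRq).
    assert (/ gam c 1 <= / gam c (nq c)) by (apply Rinv_le_contravar; lra). lra.
  - destruct (Hn Hq); lra.
Qed.

Lemma q1_neq : gam c (nq c) < 0 -> / gam c 1 <> / gam c (nq c).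
Proof.
  intros Hq. pose proof g1_pos.
  pose proof (Rinv_0_lt_compat _ H). pose proof (Rinv_lt_0_compat _ Hq). lra.
Qed.

Lemma Lamo_convex l1 l2 x : inLamo c l1 -> inLamo c l2 -> l1 <= x <= l2 -> inLamo c x.
Proof.
  intros [A1 B1] [A2 B2] Hx. split; intros Hq.
  - specialize (A2 Hq); lra.
  - specialize (B1 Hq); specialize (B2 Hq); lra.
Qed.

Lemma w0_0 : w0 c 0%nat = 0.
Proof. reflexivity. Qed.
Lemma w0_i i : inRange c i -> w0 c i = del c i.
Proof.
  intros [H1 H2]. unfold w0. apply Nat.leb_le in H1. apply Nat.leb_le in H2.
  rewrite H1, H2. reflexivity.
Qed.
Lemma Delta_0 : DeltaC c 0%nat = 0.
Proof. reflexivity. Qed.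
Lemma Delta_i i : inRange c i -> DeltaC c i = gam c i.
Proof.
  intros [H1 H2]. unfold DeltaC. apply Nat.leb_le in H1. apply Nat.leb_le in H2.
  rewrite H1, H2. reflexivity.
Qed.
Lemma d_0 : dC c 0%nat = eps c.
Proof. reflexivity. Qed.
Lemma d_i i : (1 <= i)%nat -> dC c i = 0.
Proof. intros H. unfold dC. destruct i; [lia|]. reflexivity. Qed.

Lemma Lst_split w : Lst c w = (w 0%nat) ^ 2 + sumR (fun i => (w i - del c i) ^ 2) 1 (nq c).
Proof.
  unfold Lst. rewrite sumR_first by lia. rewrite w0_0.
  f_equal; [ring|]. apply sumR_ext. intros i Hi. rewrite w0_i; [reflexivity|]. unfold inRange; lia.
Qed.

Lemma Wlam_0 lam w : Wlam c lam w -> w 0%nat = lam * eps c.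
Proof.
  intros [_ H]. specialize (H 0%nat ltac:(lia)). rewrite Delta_0, w0_0, d_0 in H. lra.
Qed.

Lemma Wlam_i lam w : Wlam c lam w -> forall i, inRange c i ->
  (1 - lam * gam c i) * w i = del c i.
Proof.
  intros [_ H] i Hi. specialize (H i ltac:(unfold inRange in Hi; lia)).
  rewrite Delta_i, w0_i, d_i in H by (auto; unfold inRange in Hi; lia). lra.
Qed.

Lemma Wlam_intro lam w : inW c w -> w 0%nat = lam * eps c ->
  (forall i, inRange c i -> (1 - lam * gam c i) * w i = del c i) -> Wlam c lam w.
Proof.
  intros HW H0 Hi. split; auto. intros i Hle. destruct i.
  - rewrite Delta_0, w0_0, d_0. lra.
  - assert (inRange c (S i)) by (unfold inRange; lia).
    rewrite Delta_i, w0_i, d_i by (auto; lia). specialize (Hi _ H). lra.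
Qed.

End S.

Section S.
Variable c : CF.
Hypothesis Hreg : regular c.

Lemma key lam u w : Wlam c lam u -> inW c w ->
  Lst c w - Lst c u = (w 0%nat - u 0%nat) ^ 2 +
    sumR (fun i => (1 - lam * gam c i) * (w i - u i) ^ 2) 1 (nq c).
Proof.
  intros Hu Hw.
  pose proof (Wlam_0 c lam u Hu) as Hu0.
  pose proof (Wlam_i c lam u Hu) as Hui.
  destruct Hu as [[_ Qu] _]. destruct Hw as [_ Qw].
  unfold Qst in Qu, Qw. rewrite !Lst_split.
  set (Gw := sumR (fun i => gam c i * w i ^ 2) 1 (nq c)) in *.
  set (Gu := sumR (fun i => gam c i * u i ^ 2) 1 (nq c)) in *.
  assert (HG : Gw - Gu = -2 * eps c * (w 0%nat - u 0%nat)) by lra.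
  pose proof (sumR_comb (fun i => (w i - del c i) ^ 2) (fun i => (u i - del c i) ^ 2)
     (fun i => gam c i * w i ^ 2) (fun i => gam c i * u i ^ 2) lam 1 (nq c)) as Hc.
  fold Gw Gu in Hc. rewrite HG in Hc.
  rewrite (sumR_ext (fun i => (w i - del c i) ^ 2 - (u i - del c i) ^ 2 -
    lam * (gam c i * w i ^ 2 - gam c i * u i ^ 2)) (fun i => (1 - lam * gam c i) * (w i - u i) ^ 2)) in Hc.
  - rewrite <- Hc. rewrite Hu0. ring.
  - intros i Hi. rewrite <- (Hui i) by (unfold inRange; lia). ring.
Qed.

Lemma key_ge lam u w : adm c lam -> Wlam c lam u -> inW c w -> Lst c u <= Lst c w.
Proof.
  intros Ha Hu Hw. pose proof (key lam u w Hu Hw).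
  assert (0 <= sumR (fun i => (1 - lam * gam c i) * (w i - u i) ^ 2) 1 (nq c)).
  { apply sumR_nonneg. intros i Hi. apply Rmult_le_pos; [apply Ha; unfold inRange; lia|].
    apply pow2_ge_0. }
  pose proof (pow2_ge_0 (w 0%nat - u 0%nat)). lra.
Qed.

Lemma Wlam_What lam u : adm c lam -> Wlam c lam u -> What c u.
Proof.
  intros Ha Hu. split; [apply Hu|]. intros v Hv. eapply key_ge; eauto.
Qed.

Lemma What_Wlam lam u w : adm c lam -> Wlam c lam u -> What c w -> Wlam c lam w.
Proof.
  intros Ha Hu [Hw Hmin].
  pose proof (key_ge lam u w Ha Hu Hw). pose proof (Hmin u (proj1 Hu)).
  pose proof (key lam u w Hu Hw) as Hk.
  set (S := sumR (fun i => (1 - lam * gam c i) * (w i - u i) ^ 2) 1 (nq c)) in *.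
  assert (HS : 0 <= S).
  { apply sumR_nonneg. intros i Hi. apply Rmult_le_pos; [apply Ha; unfold inRange; lia|].
    apply pow2_ge_0. }
  pose proof (pow2_ge_0 (w 0%nat - u 0%nat)).
  assert (Hz0 : (w 0%nat - u 0%nat) ^ 2 = 0) by lra.
  assert (HS0 : S = 0) by lra.
  pose proof (sumR_nonneg_zero (fun i => (1 - lam * gam c i) * (w i - u i) ^ 2) 1 (nq c)) as Z.
  apply Wlam_intro; auto.
  - rewrite <- (Wlam_0 c lam u Hu). nra.
  - intros i Hi. pose proof (Wlam_i c lam u Hu i Hi) as Hui.
    assert (Ht : (1 - lam * gam c i) * (w i - u i) ^ 2 = 0).
    { refine (Z _ HS0 i _).
      - intros j Hj. apply Rmult_le_pos; [apply Ha; unfold inRange; lia|]. apply pow2_ge_0.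
      - unfold inRange in Hi; lia. }
    destruct (Rmult_integral _ _ Ht) as [Hz|Hz].
    + rewrite Hz in *. lra.
    + assert (w i = u i) by nra. rewrite H2. auto.
Qed.

Lemma What_eq_Wlam lam : adm c lam -> nonempty (Wlam c lam) -> set_eq (What c) (Wlam c lam).
Proof.
  intros Ha [u Hu] w. split.
  - apply What_Wlam with u; auto.
  - intros Hw. apply Wlam_What with lam; auto.
Qed.

Lemma disjoint l1 l2 w : singLag c -> l1 <> l2 -> Wlam c l1 w -> Wlam c l2 w -> False.
Proof.
  intros [HnL HmL] Hne H1 H2.
  pose proof (Wlam_0 c _ _ H1) as A0. pose proof (Wlam_0 c _ _ H2) as B0.
  assert (He : eps c = 0).
  { assert ((l1 - l2) * eps c = 0) by lra. destruct (Rmult_integral _ _ H) as [H'|H']; auto.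
    exfalso; apply Hne; lra. }
  assert (Hwi : forall i, inRange c i -> w i = 0).
  { intros i Hi. pose proof (Wlam_i c _ _ H1 i Hi). pose proof (Wlam_i c _ _ H2 i Hi).
    assert ((l2 - l1) * gam c i * w i = 0) by lra.
    destruct (Rmult_integral _ _ H3) as [H'|H']; auto.
    destruct (Rmult_integral _ _ H') as [H''|H''].
    - exfalso; apply Hne; lra.
    - exfalso; apply (gam_nz c Hreg i Hi); auto. }
  assert (Hdi : forall i, inRange c i -> del c i = 0).
  { intros i Hi. rewrite <- (Wlam_i c _ _ H1 i Hi), Hwi; auto; ring. }
  assert (Hm : m0pos c = false).
  { destruct (m0pos c) eqn:E; auto. pose proof (eps_m1 c Hreg E). lra. }
  destruct H1 as [[_ Q] _]. unfold Qst in Q.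
  rewrite (sumR_ext _ (fun _ => 0)) in Q.
  2:{ intros i Hi. rewrite Hwi by (unfold inRange; lia). ring. }
  rewrite sumR_zero, He in Q.
  apply HmL. split; auto. split; [lra|]. auto.
Qed.

Lemma NE l1 l2 : singLag c -> adm c l1 -> adm c l2 -> l1 <> l2 ->
  nonempty (Wlam c l1) -> emptyS (Wlam c l2).
Proof.
  intros HS A1 A2 Hne [u Hu] w Hw.
  assert (Hu2 : Wlam c l2 u).
  { apply (What_Wlam l2 w u A2 Hw). apply (Wlam_What l1 u A1 Hu). }
  eapply disjoint; eauto.
Qed.

Lemma Wcirc_of lam : inLamo c lam -> nonempty (Wlam c lam) -> set_eq (What c) (Wcirc c).
Proof.
  intros Hl Hne w. split.
  - intros Hw. exists lam. split; auto. apply (What_eq_Wlam lam (adm_Lamo c Hreg lam Hl) Hne). auto.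
  - intros [l [Hl' Hw]]. apply (Wlam_What l w (adm_Lamo c Hreg l Hl') Hw).
Qed.

Lemma Wcirc_empty l : singLag c -> adm c l -> (forall lam, inLamo c lam -> lam <> l) ->
  nonempty (Wlam c l) -> emptyS (Wcirc c).
Proof.
  intros HS Ha Hn Hne w [lam [Hl Hw]].
  apply (NE l lam HS Ha (adm_Lamo c Hreg lam Hl)) with w; auto.
  all: try (intros E; apply (Hn lam Hl); auto).
Qed.

Lemma inf_of_min w : What c w -> infL c (Lst c w).
Proof.
  intros [Hw Hm]. split; auto.
Qed.

End S.

Section S.
Variable c : CF.
Hypothesis Hreg : regular c.

Lemma wlam_0 lam : wlam c lam 0%nat = lam * eps c.
Proof. reflexivity. Qed.
Lemma wlam_i lam i : inRange c i -> wlam c lam i = del c i / (1 - lam * gam c i).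
Proof.
  intros [H1 H2]. unfold wlam. destruct i; [lia|]. simpl Nat.eqb.
  apply Nat.leb_le in H2. rewrite H2. reflexivity.
Qed.
Lemma wlam_out lam i : (nq c < i)%nat -> wlam c lam i = 0.
Proof.
  intros H. unfold wlam. destruct i; [lia|]. simpl Nat.eqb.
  assert (E : (S i <=? nq c)%nat = false) by (apply Nat.leb_gt; lia). rewrite E. reflexivity.
Qed.

Lemma Q_wlam lam : inLamo c lam -> Qst c (wlam c lam) = fC c lam.
Proof.
  intros Hl. unfold Qst, fC. rewrite wlam_0.
  rewrite (sumR_ext (fun i => gam c i * wlam c lam i ^ 2)
    (fun i => gam c i * del c i ^ 2 / (1 - lam * gam c i) ^ 2)).
  - ring.
  - intros i Hi. assert (HR : inRange c i) by (unfold inRange; lia).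
    rewrite wlam_i by auto. pose proof (Lamo_pos c Hreg lam Hl i HR). field. lra.
Qed.

Lemma inspace_wlam lam : inspace c (wlam c lam).
Proof.
  split.
  - intros Hm. rewrite wlam_0, (eps_m0 c Hreg Hm). ring.
  - intros i Hi. apply wlam_out; auto.
Qed.

Lemma wlam_in lam : inLamo c lam -> fC c lam = 0 -> Wlam c lam (wlam c lam).
Proof.
  intros Hl Hf. apply Wlam_intro; auto.
  - split; [apply inspace_wlam|]. rewrite Q_wlam; auto.
  - intros i Hi. rewrite wlam_i by auto. pose proof (Lamo_pos c Hreg lam Hl i Hi). field. lra.
Qed.

Lemma Wlam_wlam lam w : inLamo c lam -> Wlam c lam w -> w = wlam c lam.
Proof.
  intros Hl Hw. apply functional_extensionality. intros i.
  destruct (Nat.eq_dec i 0) as [->|H0].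
  - rewrite wlam_0. apply (Wlam_0 c lam w Hw).
  - destruct (le_lt_dec i (nq c)).
    + assert (HR : inRange c i) by (unfold inRange; lia).
      rewrite wlam_i by auto. pose proof (Lamo_pos c Hreg lam Hl i HR).
      pose proof (Wlam_i c lam w Hw i HR). apply (Rmult_eq_reg_l (1 - lam * gam c i)); [|lra].
      rewrite H1. field. lra.
    + rewrite wlam_out by auto. destruct Hw as [[[_ Hs] _] _]. apply Hs; auto.
Qed.

Lemma Lst_wlam lam : inLamo c lam -> Lst c (wlam c lam) =
  lam ^ 2 * ((lC c 0) ^ 2 + sumR (fun i => (lC c i) ^ 2 / (1 - lam * gam c i) ^ 2) 1 (nq c)).
Proof.
  intros Hl. rewrite Lst_split, wlam_0. rewrite Rmult_plus_distr_l, sumR_scal.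
  unfold lC at 1. simpl Nat.eqb. simpl. f_equal; [ring|].
  apply sumR_ext. intros i Hi. assert (HR : inRange c i) by (unfold inRange; lia).
  rewrite wlam_i by auto. pose proof (Lamo_pos c Hreg lam Hl i HR).
  unfold lC. destruct i; [lia|]. cbn [Nat.eqb].
  assert (HA : Rabs (gam c (S i)) * Rabs (gam c (S i)) = gam c (S i) * gam c (S i))
    by (rewrite <- Rabs_mult; apply Rabs_right; nra).
  replace (Rabs (gam c (S i)) * del c (S i) * (Rabs (gam c (S i)) * del c (S i) * 1))
    with ((Rabs (gam c (S i)) * Rabs (gam c (S i))) * (del c (S i) * del c (S i))) by ring.
  rewrite HA. field. lra.
Qed.

End S.

Section S.
Variable c : CF.
Hypothesis Hreg : regular c.

Lemma r1_pos i : inRange c i -> i <> 1%nat -> 0 < 1 - gam c i / gam c 1.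
Proof.
  intros Hi H1. pose proof (gam_lt1 c Hreg i Hi H1). pose proof (g1_pos c Hreg).
  assert (gam c i / gam c 1 < 1); [|lra].
  apply (Rmult_lt_reg_r (gam c 1)); auto. field_simplify; lra.
Qed.

Lemma rq_pos i : gam c (nq c) < 0 -> inRange c i -> i <> nq c -> 0 < 1 - gam c i / gam c (nq c).
Proof.
  intros Hq Hi H1. pose proof (gam_ltq c Hreg i Hi H1).
  assert (gam c i / gam c (nq c) < 1); [|lra].
  assert (Hv : gam c (nq c) * / gam c (nq c) = 1) by (field; lra).
  assert (/ gam c (nq c) < 0) by (apply Rinv_lt_0_compat; lra).
  unfold Rdiv. nra.
Qed.

Lemma pow2_eq_cases a b : 0 <= b -> a ^ 2 = b ^ 2 -> a = b \/ a = - b.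
Proof.
  intros Hb H. assert ((a - b) * (a + b) = 0) by nra.
  destruct (Rmult_integral _ _ H0); [left|right]; lra.
Qed.

Lemma Rabs_sq_mul g d : (Rabs g * d) ^ 2 = g ^ 2 * d ^ 2.
Proof. rewrite Rpow_mult_distr, pow2_abs. reflexivity. Qed.

Lemma W1_struct w : W1 c w ->
  del c 1 = 0 /\ w 0%nat = yhat1 c /\
  (forall i, (2 <= i <= nq c)%nat -> w i = zhat1 c i) /\
  gam c 1 * (w 1%nat) ^ 2 + f1 c = 0.
Proof.
  intros Hw. pose proof (g1_pos c Hreg) as Hg1. pose proof (n_ge1 c Hreg) as Hn.
  assert (Hzi : forall i, (2 <= i <= nq c)%nat -> w i = zhat1 c i).
  { intros i Hi. assert (HR : inRange c i) by (unfold inRange; lia).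
    pose proof (Wlam_i c _ w Hw i HR). assert (Hne1 : i <> 1%nat) by lia. pose proof (r1_pos i HR Hne1).
    pose proof (gam_lt1 c Hreg i HR Hne1).
    unfold zhat1. rewrite <- H. field. split; lra. }
  assert (Hw0 : w 0%nat = yhat1 c).
  { rewrite (Wlam_0 c _ w Hw). unfold yhat1. field. lra. }
  split; [|split; [|split]]; auto.
  - pose proof (Wlam_i c _ w Hw 1 (inR1 c Hreg)). rewrite <- H. field. lra.
  - destruct Hw as [[_ Q] _]. unfold Qst in Q. rewrite sumR_first in Q by lia.
    unfold f1. rewrite <- Hw0.
    rewrite (sumR_ext (fun i => gam c i * w i ^ 2) (fun i => gam c i * zhat1 c i ^ 2)) in Q.
    + lra.
    + intros i Hi. rewrite Hzi; auto.
Qed.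

Lemma v1_0 s : v1 c s 0%nat = yhat1 c.
Proof. reflexivity. Qed.
Lemma v1_1 s : v1 c s 1%nat = s * zeta1 c.
Proof. reflexivity. Qed.
Lemma v1_i s i : (2 <= i <= nq c)%nat -> v1 c s i = zhat1 c i.
Proof.
  intros H. unfold v1. destruct i as [|[|i]]; try lia. cbn [Nat.eqb].
  assert (E : (S (S i) <=? nq c)%nat = true) by (apply Nat.leb_le; lia). rewrite E. reflexivity.
Qed.
Lemma v1_out s i : (nq c < i)%nat -> v1 c s i = 0.
Proof.
  intros H. pose proof (n_ge1 c Hreg). unfold v1. destruct i as [|[|i]]; try lia. cbn [Nat.eqb].
  assert (E : (S (S i) <=? nq c)%nat = false) by (apply Nat.leb_gt; lia). rewrite E. reflexivity.
Qed.

Lemma v1_in s : del c 1 = 0 -> 0 <= - f1 c / gam c 1 -> s ^ 2 = 1 -> W1 c (v1 c s).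
Proof.
  intros Hd Hf Hs. pose proof (g1_pos c Hreg) as Hg1. pose proof (n_ge1 c Hreg) as Hn.
  apply Wlam_intro; auto.
  - split; [split|].
    + intros Hm. rewrite v1_0. unfold yhat1. rewrite (eps_m0 c Hreg Hm). unfold Rdiv; ring.
    + intros i Hi. apply v1_out; auto.
    + unfold Qst. rewrite sumR_first by lia.
      rewrite (sumR_ext (fun i => gam c i * v1 c s i ^ 2) (fun i => gam c i * zhat1 c i ^ 2)).
      2:{ intros i Hi. rewrite v1_i; auto. }
      rewrite v1_1, v1_0. unfold zeta1.
      replace ((s * sqrt (- f1 c / gam c 1)) ^ 2) with (s ^ 2 * (sqrt (- f1 c / gam c 1)) ^ 2) by ring.
      rewrite pow2_sqrt, Hs by auto. unfold f1. field. lra.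
  - rewrite v1_0. unfold yhat1. field. lra.
  - intros i Hi. destruct (Nat.eq_dec i 1) as [->|H1].
    + rewrite Hd, v1_1. field. lra.
    + rewrite v1_i by (unfold inRange in Hi; lia). unfold zhat1.
      pose proof (gam_lt1 c Hreg i Hi H1). field. split; lra.
Qed.

Lemma W1_char : nonempty (W1 c) ->
  del c 1 = 0 /\ 0 <= - f1 c / gam c 1 /\
  set_eq (W1 c) (fun w => single (v1 c 1) w \/ single (v1 c (-1)) w).
Proof.
  intros [u Hu]. pose proof (g1_pos c Hreg) as Hg1.
  destruct (W1_struct u Hu) as [Hd [_ [_ Hq]]].
  assert (Hf : 0 <= - f1 c / gam c 1).
  { replace (- f1 c) with (gam c 1 * u 1%nat ^ 2) by lra.
    replace (gam c 1 * u 1%nat ^ 2 / gam c 1) with (u 1%nat ^ 2) by (field; lra).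
    apply pow2_ge_0. }
  split; [|split]; auto.
  intros w. split.
  - intros Hw. destruct (W1_struct w Hw) as [_ [H0 [Hi HQ]]].
    assert (Hz : w 1%nat ^ 2 = zeta1 c ^ 2).
    { unfold zeta1. rewrite pow2_sqrt by auto. replace (- f1 c) with (gam c 1 * w 1%nat ^ 2) by lra.
      field; lra. }
    assert (Hz0 : 0 <= zeta1 c) by apply sqrt_pos.
    destruct (pow2_eq_cases _ _ Hz0 Hz) as [E|E]; [left|right]; intros i;
    (destruct (Nat.eq_dec i 0) as [->|N0]; [rewrite v1_0; auto|]);
    (destruct (Nat.eq_dec i 1) as [->|N1]; [rewrite v1_1, E; ring|]);
    (destruct (le_lt_dec i (nq c)); [rewrite v1_i by lia; apply Hi; lia|]);
    rewrite v1_out by auto; destruct Hw as [[[_ Hs] _] _]; apply Hs; auto.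
  - intros [H|H]; (assert (E : w = v1 c _) by (apply functional_extensionality; exact H));
      rewrite E; apply v1_in; auto; ring.
Qed.

Lemma Lst_v1 : del c 1 = 0 -> 0 <= - f1 c / gam c 1 ->
  Lst c (v1 c 1) = / (gam c 1) ^ 2 * ((lC c 0) ^ 2 +
     sumR (fun i => (lC c i) ^ 2 / (1 - gam c i / gam c 1) ^ 2) 2 (nq c)) + (zeta1 c) ^ 2.
Proof.
  intros Hd Hf. pose proof (g1_pos c Hreg) as Hg1. pose proof (n_ge1 c Hreg) as Hn.
  rewrite Lst_split, sumR_first by lia. rewrite v1_0, v1_1, Hd.
  rewrite Rmult_plus_distr_l, sumR_scal.
  rewrite (sumR_ext (fun i => (v1 c 1 i - del c i) ^ 2)
     (fun i => / gam c 1 ^ 2 * (lC c i ^ 2 / (1 - gam c i / gam c 1) ^ 2))).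
  - change (lC c 0) with (eps c). unfold yhat1. field. lra.
  - intros i Hi. rewrite v1_i by auto. assert (HR : inRange c i) by (unfold inRange; lia).
    assert (Hne1 : i <> 1%nat) by lia. pose proof (r1_pos i HR Hne1). unfold lC. destruct i; [lia|]. cbn [Nat.eqb].
    pose proof (gam_lt1 c Hreg _ HR Hne1). rewrite Rabs_sq_mul. unfold zhat1. field; repeat split; intro; lra.
Qed.

Section Q.
Hypothesis Hq : gam c (nq c) < 0.

Lemma n_ge2 : (2 <= nq c)%nat.
Proof.
  pose proof (n_ge1 c Hreg). destruct (Nat.eq_dec (nq c) 1) as [E|E]; [|lia].
  pose proof (g1_pos c Hreg). rewrite E in Hq. lra.
Qed.

Lemma Wq_struct w : Wq c w ->
  del c (nq c) = 0 /\ w 0%nat = yhatq c /\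
  (forall i, (1 <= i <= nq c - 1)%nat -> w i = zhatq c i) /\
  gam c (nq c) * (w (nq c)) ^ 2 + fq c = 0.
Proof.
  intros Hw. pose proof n_ge2 as Hn.
  assert (Hzi : forall i, (1 <= i <= nq c - 1)%nat -> w i = zhatq c i).
  { intros i Hi. assert (HR : inRange c i) by (unfold inRange; lia).
    pose proof (Wlam_i c _ w Hw i HR). assert (Hneq : i <> nq c) by lia. pose proof (rq_pos i Hq HR Hneq).
    pose proof (gam_ltq c Hreg i HR Hneq).
    unfold zhatq. rewrite <- H. field. split; lra. }
  assert (Hw0 : w 0%nat = yhatq c).
  { rewrite (Wlam_0 c _ w Hw). unfold yhatq. field. lra. }
  split; [|split; [|split]]; auto.
  - pose proof (Wlam_i c _ w Hw _ (inRq c Hreg)). rewrite <- H. field. lra.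
  - destruct Hw as [[_ Q] _]. unfold Qst in Q. rewrite sumR_last in Q by lia.
    unfold fq. rewrite <- Hw0.
    rewrite (sumR_ext (fun i => gam c i * w i ^ 2) (fun i => gam c i * zhatq c i ^ 2)) in Q.
    + lra.
    + intros i Hi. rewrite Hzi; auto.
Qed.

Lemma vq_0 s : vq c s 0%nat = yhatq c.
Proof. reflexivity. Qed.
Lemma vq_n s : vq c s (nq c) = s * zetaq c.
Proof.
  pose proof n_ge2. unfold vq. destruct (Nat.eqb_spec (nq c) 0); [lia|].
  rewrite Nat.eqb_refl. reflexivity.
Qed.
Lemma vq_i s i : (1 <= i <= nq c - 1)%nat -> vq c s i = zhatq c i.
Proof.
  intros H. unfold vq. destruct (Nat.eqb_spec i 0); [lia|].
  destruct (Nat.eqb_spec i (nq c)); [lia|]. destruct (Nat.ltb_spec i (nq c)); [reflexivity|lia].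
Qed.
Lemma vq_out s i : (nq c < i)%nat -> vq c s i = 0.
Proof.
  intros H. unfold vq. destruct (Nat.eqb_spec i 0); [lia|].
  destruct (Nat.eqb_spec i (nq c)); [lia|]. destruct (Nat.ltb_spec i (nq c)); [lia|reflexivity].
Qed.

Lemma vq_in s : del c (nq c) = 0 -> 0 <= fq c / (- gam c (nq c)) -> s ^ 2 = 1 -> Wq c (vq c s).
Proof.
  intros Hd Hf Hs. pose proof n_ge2 as Hn.
  apply Wlam_intro; auto.
  - split; [split|].
    + intros Hm. rewrite vq_0. unfold yhatq. rewrite (eps_m0 c Hreg Hm). unfold Rdiv; ring.
    + intros i Hi. apply vq_out; auto.
    + unfold Qst. rewrite sumR_last by lia.
      rewrite (sumR_ext (fun i => gam c i * vq c s i ^ 2) (fun i => gam c i * zhatq c i ^ 2)).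
      2:{ intros i Hi. rewrite vq_i; auto. }
      rewrite vq_n, vq_0. unfold zetaq.
      replace ((s * sqrt (fq c / - gam c (nq c))) ^ 2) with (s ^ 2 * (sqrt (fq c / - gam c (nq c))) ^ 2) by ring.
      rewrite pow2_sqrt, Hs by auto. unfold fq. field. lra.
  - rewrite vq_0. unfold yhatq. field. lra.
  - intros i Hi. destruct (Nat.eq_dec i (nq c)) as [->|H1].
    + rewrite Hd, vq_n. field. lra.
    + rewrite vq_i by (unfold inRange in Hi; lia). unfold zhatq.
      pose proof (gam_ltq c Hreg i Hi H1). field. split; lra.
Qed.

Lemma Wq_char : nonempty (Wq c) ->
  del c (nq c) = 0 /\ 0 <= fq c / (- gam c (nq c)) /\
  set_eq (Wq c) (fun w => single (vq c 1) w \/ single (vq c (-1)) w).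
Proof.
  intros [u Hu]. pose proof n_ge2 as Hn.
  destruct (Wq_struct u Hu) as [Hd [_ [_ HQ]]].
  assert (Hf : 0 <= fq c / (- gam c (nq c))).
  { replace (fq c) with (- gam c (nq c) * u (nq c) ^ 2) by lra.
    replace (- gam c (nq c) * u (nq c) ^ 2 / - gam c (nq c)) with (u (nq c) ^ 2) by (field; lra).
    apply pow2_ge_0. }
  split; [|split]; auto.
  intros w. split.
  - intros Hw. destruct (Wq_struct w Hw) as [_ [H0 [Hi HQ']]].
    assert (Hz : w (nq c) ^ 2 = zetaq c ^ 2).
    { unfold zetaq. rewrite pow2_sqrt by auto. replace (fq c) with (- gam c (nq c) * w (nq c) ^ 2) by lra.
      field; lra. }
    assert (Hz0 : 0 <= zetaq c) by apply sqrt_pos.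
    destruct (pow2_eq_cases _ _ Hz0 Hz) as [E|E]; [left|right]; intros i;
    (destruct (Nat.eq_dec i 0) as [->|N0]; [rewrite vq_0; auto|]);
    (destruct (Nat.eq_dec i (nq c)) as [->|N1]; [rewrite vq_n, E; ring|]);
    (destruct (le_lt_dec i (nq c)); [rewrite vq_i by lia; apply Hi; lia|]);
    rewrite vq_out by auto; destruct Hw as [[[_ Hs] _] _]; apply Hs; auto.
  - intros [H|H]; (assert (E : w = vq c _) by (apply functional_extensionality; exact H));
      rewrite E; apply vq_in; auto; ring.
Qed.

Lemma Lst_vq : del c (nq c) = 0 -> 0 <= fq c / (- gam c (nq c)) ->
  Lst c (vq c 1) = / (gam c (nq c)) ^ 2 * ((lC c 0) ^ 2 +
     sumR (fun i => (lC c i) ^ 2 / (1 - gam c i / gam c (nq c)) ^ 2) 1 (nq c - 1)) + (zetaq c) ^ 2.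
Proof.
  intros Hd Hf. pose proof n_ge2 as Hn.
  rewrite Lst_split, sumR_last by lia. rewrite vq_0, vq_n, Hd.
  rewrite Rmult_plus_distr_l, sumR_scal.
  rewrite (sumR_ext (fun i => (vq c 1 i - del c i) ^ 2)
     (fun i => / gam c (nq c) ^ 2 * (lC c i ^ 2 / (1 - gam c i / gam c (nq c)) ^ 2))).
  - change (lC c 0) with (eps c). unfold yhatq. field. lra.
  - intros i Hi. rewrite vq_i by auto. assert (HR : inRange c i) by (unfold inRange; lia).
    assert (Hneq : i <> nq c) by lia. pose proof (rq_pos i Hq HR Hneq). unfold lC. destruct i; [lia|]. cbn [Nat.eqb].
    pose proof (gam_ltq c Hreg _ HR Hneq). rewrite Rabs_sq_mul. unfold zhatq. field; repeat split; intro; lra.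
Qed.

End Q.
End S.

Lemma Rdiv_nn a b : 0 <= a -> 0 < b -> 0 <= a / b.
Proof. intros. unfold Rdiv. apply Rmult_le_pos; auto. left; apply Rinv_0_lt_compat; auto. Qed.

Lemma cont_ext (f g : R -> R) x : (forall y, f y = g y) -> continuity_pt g x -> continuity_pt f x.
Proof.
  intros H Hg. assert (E : f = g) by (apply functional_extensionality; auto). rewrite E; auto.
Qed.
Lemma cont_const a x : continuity_pt (fun _ => a) x.
Proof. apply continuity_pt_const. intros u v; reflexivity. Qed.
Lemma cont_id x : continuity_pt (fun y => y) x.
Proof. apply (derivable_continuous_pt id x (derivable_pt_id x)). Qed.
Lemma cont_plus (f g : R -> R) x : continuity_pt f x -> continuity_pt g x ->
  continuity_pt (fun y => f y + g y) x.
Proof. intros; exact (continuity_pt_plus f g x H H0). Qed.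
Lemma cont_minus (f g : R -> R) x : continuity_pt f x -> continuity_pt g x ->
  continuity_pt (fun y => f y - g y) x.
Proof. intros; exact (continuity_pt_minus f g x H H0). Qed.
Lemma cont_mult (f g : R -> R) x : continuity_pt f x -> continuity_pt g x ->
  continuity_pt (fun y => f y * g y) x.
Proof. intros; exact (continuity_pt_mult f g x H H0). Qed.
Lemma cont_div (f g : R -> R) x : continuity_pt f x -> continuity_pt g x -> g x <> 0 ->
  continuity_pt (fun y => f y / g y) x.
Proof. intros; exact (continuity_pt_div f g x H H0 H1). Qed.
Lemma cont_opp (f : R -> R) x : continuity_pt f x -> continuity_pt (fun y => - f y) x.
Proof. intros; exact (continuity_pt_opp f x H). Qed.

Lemma cont_term A g x : 1 - x * g <> 0 -> continuity_pt (fun y => A / (1 - y * g) ^ 2) x.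
Proof.
  intros H. apply cont_div.
  - apply cont_const.
  - apply (cont_ext _ (fun y => (1 - y * g) * (1 - y * g))); [intros; ring|].
    apply cont_mult; apply cont_minus; try apply cont_const; apply cont_mult; try apply cont_id; apply cont_const.
  - intro E. apply H. apply (pow_eq_zero_pow2 _ _ ) in E || idtac. nra.
Qed.

Lemma cont_lsum (F : nat -> R -> R) l x : (forall i, In i l -> continuity_pt (F i) x) ->
  continuity_pt (fun y => lsum (fun i => F i y) l) x.
Proof.
  induction l; simpl; intros H.
  - apply cont_const.
  - apply (cont_plus (F a) (fun y => lsum (fun i => F i y) l)); auto.
Qed.

Lemma cont_sumR (F : nat -> R -> R) a b x : (forall i, (a <= i <= b)%nat -> continuity_pt (F i) x) ->
  continuity_pt (fun y => sumR (fun i => F i y) a b) x.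
Proof.
  intros H. apply cont_lsum. intros i Hi. apply H. apply in_range; auto.
Qed.

Lemma blowup (P D : R) (G : R -> R) (a : R) : 0 < P -> 0 < a -> continuity_pt G 0 ->
  (forall h, 0 < h < a -> D ^ 2 / (P * h ^ 2) + G h <= 0) -> D = 0 /\ G 0 <= 0.
Proof.
  intros HP Ha HG Hh.
  unfold continuity_pt, continue_in, limit1_in, limit_in in HG. simpl in HG.
  unfold R_dist in HG.
  assert (HD : D = 0).
  { destruct (Req_dec D 0) as [|HD]; auto. exfalso.
    destruct (HG 1 ltac:(lra)) as [d [Hd Hc]].
    set (M := Rabs (G 0) + 2).
    assert (HM : 0 < M) by (unfold M; pose proof (Rabs_pos (G 0)); lra).
    assert (HD2 : 0 < D ^ 2) by (apply pow2_gt_0 || nra).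
    set (b := D ^ 2 / (P * M)).
    assert (Hb : 0 < b) by (unfold b; apply Rdiv_lt_0_compat; nra).
    set (m := Rmin (Rmin a d) (Rmin 1 b)).
    assert (Hm : 0 < m) by (unfold m; repeat apply Rmin_glb_lt; lra).
    assert (Hma : m <= a) by (unfold m; eapply Rle_trans; [apply Rmin_l|apply Rmin_l]).
    assert (Hmd : m <= d) by (unfold m; eapply Rle_trans; [apply Rmin_l|apply Rmin_r]).
    assert (Hm1 : m <= 1) by (unfold m; eapply Rle_trans; [apply Rmin_r|apply Rmin_l]).
    assert (Hmb : m <= b) by (unfold m; eapply Rle_trans; [apply Rmin_r|apply Rmin_r]).
    set (h := m / 2).
    assert (Hh0 : 0 < h < a) by (unfold h; lra).
    specialize (Hh h Hh0).
    assert (Hc' : Rabs (G h - G 0) < 1).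
    { apply Hc. split.
      - split; [exact I|]. unfold h; lra.
      - rewrite Rminus_0_r, Rabs_right; unfold h; lra. }
    assert (Hh2 : P * M * h ^ 2 <= D ^ 2).
    { assert (h ^ 2 <= b) by (unfold h in *; nra).
      unfold b in H. apply (Rmult_le_compat_l (P * M)) in H; [|nra].
      replace (P * M * (D ^ 2 / (P * M))) with (D ^ 2) in H by (field; lra). lra. }
    assert (HQ : M <= D ^ 2 / (P * h ^ 2)).
    { assert (Hp2 : 0 < P * h ^ 2) by (apply Rmult_lt_0_compat; [lra|apply pow_lt; lra]).
      apply (Rmult_le_reg_r (P * h ^ 2)); [lra|].
      replace (D ^ 2 / (P * h ^ 2) * (P * h ^ 2)) with (D ^ 2) by (field; repeat split; intro; subst; lra).
      lra. }
    pose proof (Rabs_def2 _ _ Hc') as [H1 H2].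
    pose proof (Rabs_pos (G 0)). pose proof (Rle_abs (- G 0)) as H3. rewrite Rabs_Ropp in H3.
    unfold M in HQ. lra. }
  split; auto.
  destruct (Rle_or_lt (G 0) 0) as [|Hpos]; auto. exfalso.
  destruct (HG (G 0) Hpos) as [d [Hd Hc]].
  set (h := Rmin a d / 2).
  assert (Hm : 0 < Rmin a d) by (apply Rmin_glb_lt; lra).
  assert (Hh0 : 0 < h < a) by (unfold h; pose proof (Rmin_l a d); lra).
  specialize (Hh h Hh0). rewrite HD in Hh.
  replace (0 ^ 2 / (P * h ^ 2)) with 0 in Hh by (unfold Rdiv; ring).
  assert (Hc' : Rabs (G h - G 0) < G 0).
  { apply Hc. split.
    - split; [exact I|]. unfold h; lra.
    - rewrite Rminus_0_r, Rabs_right; unfold h; pose proof (Rmin_r a d); lra. }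
  pose proof (Rabs_def2 _ _ Hc') as [H1 H2]. lra.
Qed.

Section S.
Variable c : CF.
Hypothesis Hreg : regular c.

Lemma fC_cont lam : inLamo c lam -> continuity_pt (fC c) lam.
Proof.
  intros Hl. unfold fC.
  apply (cont_minus (fun y => sumR (fun i => gam c i * del c i ^ 2 / (1 - y * gam c i) ^ 2) 1 (nq c)
     + 2 * eps c ^ 2 * y) (fun _ => kst c)); [|apply cont_const].
  apply cont_plus.
  - apply (cont_sumR (fun i y => gam c i * del c i ^ 2 / (1 - y * gam c i) ^ 2)).
    intros i Hi. apply cont_term. pose proof (Lamo_pos c Hreg lam Hl i ltac:(unfold inRange; lia)). lra.
  - apply cont_mult; [apply cont_const|apply cont_id].
Qed.

Lemma IVT_root l1 l2 : inLamo c l1 -> inLamo c l2 -> fC c l1 < 0 -> 0 < fC c l2 ->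
  exists lam, inLamo c lam /\ fC c lam = 0.
Proof.
  intros H1 H2 F1 F2. destruct (total_order_T l1 l2) as [[Hlt|Heq]|Hgt].
  - destruct (Ranalysis5.IVT_interv (fC c) l1 l2) as [z [Hz Hf]]; auto.
    + intros a Ha. apply fC_cont. apply (Lamo_convex c l1 l2); auto.
    + exists z; split; auto. apply (Lamo_convex c l1 l2); auto.
  - subst; lra.
  - destruct (Ranalysis5.IVT_interv (fun x => - fC c x) l2 l1) as [z [Hz Hf]]; auto.
    + intros a Ha. apply cont_opp. apply fC_cont. apply (Lamo_convex c l2 l1); auto.
    + lra.
    + lra.
    + exists z; split; [apply (Lamo_convex c l2 l1); auto|lra].
Qed.

Lemma fC_bound lam : 0 < gam c (nq c) -> lam < 0 ->
  fC c lam <= sumR (fun i => del c i ^ 2) 1 (nq c) / (- lam) + 2 * eps c ^ 2 * lam - kst c.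
Proof.
  intros Hq Hl. unfold fC.
  assert (sumR (fun i => gam c i * del c i ^ 2 / (1 - lam * gam c i) ^ 2) 1 (nq c) <=
          sumR (fun i => del c i ^ 2) 1 (nq c) / (- lam)); [|lra].
  unfold Rdiv at 2. rewrite Rmult_comm, sumR_scal. apply sumR_le. intros i Hi.
  assert (HR : inRange c i) by (unfold inRange; lia).
  pose proof (gam_geq c Hreg i HR).
  set (g := gam c i) in *. set (x := 1 - lam * g).
  assert (Hx : 1 < x) by (unfold x; nra).
  assert (Hx2 : - lam * g <= x ^ 2) by (unfold x in *; nra).
  assert (Hd : 0 <= del c i ^ 2) by apply pow2_ge_0.
  assert (E : / - lam * del c i ^ 2 - g * del c i ^ 2 / x ^ 2 =
              del c i ^ 2 * (x ^ 2 - (- lam * g)) / ((- lam) * x ^ 2)) by (field; split; lra).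
  assert (0 <= del c i ^ 2 * (x ^ 2 - (- lam * g)) / ((- lam) * x ^ 2)).
  { apply Rdiv_nn; [apply Rmult_le_pos; lra|apply Rmult_lt_0_compat; [lra|apply pow_lt; lra]]. }
  lra.
Qed.

Lemma E1neg : singLag c -> 0 < gam c (nq c) -> exists lam, inLamo c lam /\ fC c lam < 0.
Proof.
  intros [HnL HmL] Hq.
  set (D := sumR (fun i => del c i ^ 2) 1 (nq c)).
  assert (HD : 0 <= D) by (apply sumR_nonneg; intros; apply pow2_ge_0).
  pose proof (g1_pos c Hreg).
  assert (Hin : forall lam, lam < 0 -> inLamo c lam).
  { intros lam Hl. split; intros.
    - pose proof (Rinv_0_lt_compat _ H). lra.
    - lra. }
  pose proof (eps_nn c Hreg) as He.
  destruct (Rle_lt_or_eq_dec _ _ He) as [Hep|Hep0].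
  - set (T := (Rabs (D - kst c) + 1) / (2 * eps c ^ 2) + 1).
    assert (He2 : 0 < eps c ^ 2) by (apply pow_lt; lra).
    assert (HT : 1 <= T).
    { unfold T. assert (0 <= (Rabs (D - kst c) + 1) / (2 * eps c ^ 2)); [|lra].
      apply Rdiv_nn; [pose proof (Rabs_pos (D - kst c)); lra| lra]. }
    exists (- T). split; [apply Hin; lra|].
    pose proof (fC_bound (- T) Hq ltac:(lra)) as B. fold D in B.
    replace (- - T) with T in B by ring.
    assert (D / T <= D).
    { apply (Rmult_le_reg_r T); [lra|]. replace (D / T * T) with D by (field; lra). nra. }
    assert (2 * eps c ^ 2 * T > Rabs (D - kst c) + 1).
    { unfold T. replace (2 * eps c ^ 2 * ((Rabs (D - kst c) + 1) / (2 * eps c ^ 2) + 1))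
        with (Rabs (D - kst c) + 1 + 2 * eps c ^ 2) by (field; lra). lra. }
    pose proof (Rle_abs (D - kst c)). lra.
  - rewrite <- Hep0 in *.
    assert (Hm : m0pos c = false).
    { destruct (m0pos c) eqn:E; auto. pose proof (eps_m1 c Hreg E). lra. }
    destruct (W_ne c Hreg) as [w [_ Qw]]. unfold Qst in Qw. rewrite <- Hep0 in Qw.
    assert (Hk0 : 0 <= kst c).
    { assert (0 <= sumR (fun i => gam c i * w i ^ 2) 1 (nq c)); [|lra].
      apply sumR_nonneg. intros i Hi. pose proof (gam_geq c Hreg i ltac:(unfold inRange; lia)).
      apply Rmult_le_pos; [lra|apply pow2_ge_0]. }
    assert (Hk : 0 < kst c).
    { destruct (Rle_lt_or_eq_dec _ _ Hk0) as [|Hk]; auto. exfalso.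
      destruct (classic (exists i, inRange c i /\ del c i <> 0)) as [Hex|Hnex].
      - apply HnL. repeat split; auto.
      - apply HmL. repeat split; auto. intros i Hi. apply NNPP. intro. apply Hnex. eauto. }
    set (lam := - (D / kst c + 1)).
    assert (HDk : 0 <= D / kst c) by (apply Rdiv_nn; lra).
    exists lam. split; [apply Hin; unfold lam; lra|].
    pose proof (fC_bound lam Hq ltac:(unfold lam; lra)) as B. fold D in B.
    assert (D / - lam < kst c).
    { unfold lam. replace (- - (D / kst c + 1)) with (D / kst c + 1) by ring.
      apply (Rmult_lt_reg_r (D / kst c + 1)); [lra|].
      replace (D / (D / kst c + 1) * (D / kst c + 1)) with D by (field; lra).
      replace (kst c * (D / kst c + 1)) with (D + kst c) by (field; lra). lra. }
    rewrite <- Hep0 in B. replace (2 * 0 ^ 2 * lam) with 0 in B by ring. lra.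
Qed.

End S.

Section S.
Variable c : CF.
Hypothesis Hreg : regular c.

Definition R1 lam := sumR (fun i => gam c i * del c i ^ 2 / (1 - lam * gam c i) ^ 2) 2 (nq c)
  + 2 * eps c ^ 2 * lam - kst c.

Lemma fC_split1 lam : fC c lam = gam c 1 * del c 1 ^ 2 / (1 - lam * gam c 1) ^ 2 + R1 lam.
Proof. unfold fC, R1. rewrite sumR_first by (apply (n_ge1 c Hreg)). ring. Qed.

Lemma R1_at : R1 (/ gam c 1) = f1 c.
Proof.
  pose proof (g1_pos c Hreg). unfold R1, f1, yhat1.
  rewrite (sumR_ext _ (fun i => gam c i * zhat1 c i ^ 2)).
  - field. lra.
  - intros i Hi. assert (HR : inRange c i) by (unfold inRange; lia).
    assert (Hne : i <> 1%nat) by lia. pose proof (gam_lt1 c Hreg i HR Hne).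
    unfold zhat1. field. split; lra.
Qed.

Lemma R1_cont : continuity_pt R1 (/ gam c 1).
Proof.
  pose proof (g1_pos c Hreg). unfold R1.
  apply (cont_minus (fun y => sumR (fun i => gam c i * del c i ^ 2 / (1 - y * gam c i) ^ 2) 2 (nq c)
     + 2 * eps c ^ 2 * y) (fun _ => kst c)); [|apply cont_const].
  apply cont_plus.
  - apply (cont_sumR (fun i y => gam c i * del c i ^ 2 / (1 - y * gam c i) ^ 2)).
    intros i Hi. apply cont_term. assert (HR : inRange c i) by (unfold inRange; lia).
    assert (Hne : i <> 1%nat) by lia. pose proof (gam_lt1 c Hreg i HR Hne).
    intro E. assert (gam c i = gam c 1); [|lra].
    apply (Rmult_eq_reg_l (/ gam c 1)); [|apply Rinv_neq_0_compat; lra].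
    rewrite Rinv_l by lra. lra.
  - apply cont_mult; [apply cont_const|apply cont_id].
Qed.

Lemma E3lim : (forall lam, inLamo c lam -> fC c lam <= 0) -> nonempty (W1 c).
Proof.
  intros Hf. pose proof (g1_pos c Hreg) as Hg1.
  pose proof (Rinv_0_lt_compat _ Hg1) as Hi1.
  set (G := fun h => R1 (/ gam c 1 - h)).
  assert (HG : continuity_pt G 0).
  { apply (cont_ext G (comp R1 (fun h => / gam c 1 - h))); [intros; reflexivity|].
    apply continuity_pt_comp.
    - apply cont_minus; [apply cont_const|apply cont_id].
    - replace (/ gam c 1 - 0) with (/ gam c 1) by ring. apply R1_cont. }
  destruct (blowup (gam c 1) (del c 1) G (/ gam c 1) Hg1 Hi1 HG) as [Hd HG0].
  - intros h Hh. set (lam := / gam c 1 - h).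
    assert (Hl : inLamo c lam).
    { split; intros Hq; [unfold lam; lra|].
      pose proof (Rinv_lt_0_compat _ Hq). unfold lam; lra. }
    pose proof (Hf lam Hl). rewrite fC_split1 in H.
    replace (1 - lam * gam c 1) with (h * gam c 1) in H by (unfold lam; field; lra).
    replace (gam c 1 * del c 1 ^ 2 / (h * gam c 1) ^ 2) with (del c 1 ^ 2 / (gam c 1 * h ^ 2)) in H
      by (field; split; lra).
    exact H.
  - unfold G in HG0. replace (/ gam c 1 - 0) with (/ gam c 1) in HG0 by ring.
    rewrite R1_at in HG0. exists (v1 c 1). apply v1_in; auto.
    + apply Rdiv_nn; lra.
    + ring.
Qed.

Definition Rq lam := sumR (fun i => gam c i * del c i ^ 2 / (1 - lam * gam c i) ^ 2) 1 (nq c - 1)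
  + 2 * eps c ^ 2 * lam - kst c.

Section Q.
Hypothesis Hq : gam c (nq c) < 0.

Lemma fC_splitq lam : fC c lam = Rq lam + gam c (nq c) * del c (nq c) ^ 2 / (1 - lam * gam c (nq c)) ^ 2.
Proof.
  pose proof (n_ge2 c Hreg Hq). unfold fC, Rq. rewrite sumR_last by lia. ring.
Qed.

Lemma Rq_at : Rq (/ gam c (nq c)) = fq c.
Proof.
  pose proof (n_ge2 c Hreg Hq). unfold Rq, fq, yhatq.
  rewrite (sumR_ext _ (fun i => gam c i * zhatq c i ^ 2)).
  - field. lra.
  - intros i Hi. assert (HR : inRange c i) by (unfold inRange; lia).
    assert (Hne : i <> nq c) by lia. pose proof (gam_ltq c Hreg i HR Hne).
    unfold zhatq. field. split; lra.
Qed.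

Lemma Rq_cont : continuity_pt Rq (/ gam c (nq c)).
Proof.
  pose proof (n_ge2 c Hreg Hq). unfold Rq.
  apply (cont_minus (fun y => sumR (fun i => gam c i * del c i ^ 2 / (1 - y * gam c i) ^ 2) 1 (nq c - 1)
     + 2 * eps c ^ 2 * y) (fun _ => kst c)); [|apply cont_const].
  apply cont_plus.
  - apply (cont_sumR (fun i y => gam c i * del c i ^ 2 / (1 - y * gam c i) ^ 2)).
    intros i Hi. apply cont_term. assert (HR : inRange c i) by (unfold inRange; lia).
    assert (Hne : i <> nq c) by lia. pose proof (gam_ltq c Hreg i HR Hne).
    intro E. assert (gam c i = gam c (nq c)); [|lra].
    apply (Rmult_eq_reg_l (/ gam c (nq c))); [|apply Rinv_neq_0_compat; lra].
    rewrite Rinv_l by lra. lra.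
  - apply cont_mult; [apply cont_const|apply cont_id].
Qed.

Lemma E4lim : (forall lam, inLamo c lam -> 0 <= fC c lam) -> nonempty (Wq c).
Proof.
  intros Hf. pose proof (g1_pos c Hreg) as Hg1.
  pose proof (Rinv_0_lt_compat _ Hg1) as Hi1.
  pose proof (Rinv_lt_0_compat _ Hq) as Hiq.
  set (G := fun h => - Rq (/ gam c (nq c) + h)).
  assert (HG : continuity_pt G 0).
  { apply (cont_ext G (fun h => - (comp Rq (fun h => / gam c (nq c) + h)) h)); [intros; reflexivity|].
    apply cont_opp. apply continuity_pt_comp.
    - apply cont_plus; [apply cont_const|apply cont_id].
    - replace (/ gam c (nq c) + 0) with (/ gam c (nq c)) by ring. apply Rq_cont. }
  assert (HP : 0 < - gam c (nq c)) by lra.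
  assert (Ha : 0 < - / gam c (nq c)) by lra.
  destruct (blowup (- gam c (nq c)) (del c (nq c)) G (- / gam c (nq c)) HP Ha HG) as [Hd HG0].
  - intros h Hh. set (lam := / gam c (nq c) + h).
    assert (Hl : inLamo c lam).
    { split; intros Hq'; [lra|]. unfold lam; lra. }
    pose proof (Hf lam Hl). rewrite fC_splitq in H.
    replace (1 - lam * gam c (nq c)) with (- (h * gam c (nq c))) in H by (unfold lam; field; lra).
    replace (gam c (nq c) * del c (nq c) ^ 2 / (- (h * gam c (nq c))) ^ 2)
      with (- (del c (nq c) ^ 2 / (- gam c (nq c) * h ^ 2))) in H by (field; split; lra).
    unfold G. fold lam. lra.
  - unfold G in HG0. replace (/ gam c (nq c) + 0) with (/ gam c (nq c)) in HG0 by ring.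
    rewrite Rq_at in HG0. exists (vq c 1). apply vq_in; auto.
    + apply Rdiv_nn; lra.
    + ring.
Qed.

End Q.
End S.

Lemma single_eq v w : single v w <-> w = v.
Proof.
  split.
  - intros H. apply functional_extensionality. exact H.
  - intros ->. intros i. reflexivity.
Qed.

Section S.
Variable c : CF.
Hypothesis Hreg : regular c.

Lemma exist_main : singLag c ->
  (exists lam, inLamo c lam /\ fC c lam = 0) \/ nonempty (W1 c) \/
  (gam c (nq c) < 0 /\ nonempty (Wq c)).
Proof.
  intros HS.
  destruct (classic (forall lam, inLamo c lam -> fC c lam <= 0)) as [Hle|Hnle].
  - right; left. apply E3lim; auto.
  - assert (Hpos : exists l2, inLamo c l2 /\ 0 < fC c l2).
    { apply NNPP. intro Hn. apply Hnle. intros lam Hl. apply Rnot_lt_le. intro. apply Hn; eauto. }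
    destruct Hpos as [l2 [Hl2 Hf2]].
    destruct (classic (exists l1, inLamo c l1 /\ fC c l1 < 0)) as [[l1 [Hl1 Hf1]]|Hnn].
    + left. apply (IVT_root c Hreg l1 l2); auto.
    + assert (Hge : forall lam, inLamo c lam -> 0 <= fC c lam).
      { intros lam Hl. apply Rnot_lt_le. intro. apply Hnn; eauto. }
      destruct (gq_cases c Hreg) as [Hq|Hq].
      * exfalso. destruct (E1neg c Hreg HS Hq) as [l [Hl Hf]]. apply Hnn; eauto.
      * right; right. split; auto. apply E4lim; auto.
Qed.

Lemma root_ne lam : inLamo c lam -> fC c lam = 0 -> nonempty (Wlam c lam).
Proof. intros Hl Hf. exists (wlam c lam). apply wlam_in; auto. Qed.

Lemma What_ne : singLag c -> nonempty (What c).
Proof.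
  intros HS. destruct (exist_main HS) as [[lam [Hl Hf]]|[[w Hw]|[Hq [w Hw]]]].
  - exists (wlam c lam). apply (Wlam_What c lam). apply adm_Lamo; auto. apply wlam_in; auto.
  - exists w. apply (Wlam_What c _ w (adm_1 c Hreg) Hw).
  - exists w. apply (Wlam_What c _ w (adm_q c Hreg Hq) Hw).
Qed.

Lemma circ_case lam : singLag c -> inLamo c lam -> nonempty (Wlam c lam) ->
  nonempty (Wcirc c) /\ set_eq (What c) (Wcirc c) /\ emptyS (W1 c) /\
  (gam c (nq c) < 0 -> emptyS (Wq c)).
Proof.
  intros HS Hl Hne. split; [|split; [|split]].
  - destruct Hne as [w Hw]. exists w, lam. auto.
  - apply (Wcirc_of c Hreg lam); auto.
  - apply (NE c Hreg lam); auto. apply adm_Lamo; auto. apply adm_1; auto. apply not_Lamo_1; auto.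
  - intros Hq. apply (NE c Hreg lam); auto. apply adm_Lamo; auto. apply adm_q; auto.
    apply not_Lamo_q; auto.
Qed.

Lemma one_case : singLag c -> nonempty (W1 c) ->
  emptyS (Wcirc c) /\ nonempty (W1 c) /\ set_eq (What c) (W1 c) /\
  (gam c (nq c) < 0 -> emptyS (Wq c)).
Proof.
  intros HS Hne. split; [|split; [|split]]; auto.
  - apply (Wcirc_empty c Hreg (/ gam c 1)); auto. apply adm_1; auto. apply not_Lamo_1; auto.
  - apply What_eq_Wlam; auto. apply adm_1; auto.
  - intros Hq. apply (NE c Hreg (/ gam c 1)); auto. apply adm_1; auto. apply adm_q; auto.
    apply q1_neq; auto.
Qed.

Lemma q_case : singLag c -> gam c (nq c) < 0 -> nonempty (Wq c) ->
  gam c (nq c) < 0 /\ emptyS (Wcirc c) /\ emptyS (W1 c) /\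
  nonempty (Wq c) /\ set_eq (What c) (Wq c).
Proof.
  intros HS Hq Hne. split; [|split; [|split; [|split]]]; auto.
  - apply (Wcirc_empty c Hreg (/ gam c (nq c))); auto. apply adm_q; auto. apply not_Lamo_q; auto.
  - apply (NE c Hreg (/ gam c (nq c))); auto. apply adm_q; auto. apply adm_1; auto.
    intro E; apply (q1_neq c Hreg Hq); auto.
  - apply What_eq_Wlam; auto. apply adm_q; auto.
Qed.

Lemma sing_circ : singLag c -> set_eq (What c) (Wcirc c) ->
  (exists! lam, inLamo c lam /\ fC c lam = 0) /\
  (forall lam, inLamo c lam -> fC c lam = 0 ->
     infL c (lam ^ 2 * ((lC c 0) ^ 2 +
       sumR (fun i => (lC c i) ^ 2 / (1 - lam * gam c i) ^ 2) 1 (nq c))) /\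
     set_eq (What c) (single (wlam c lam))).
Proof.
  intros HS HW.
  assert (Hroot : forall lam, inLamo c lam -> fC c lam = 0 ->
     set_eq (What c) (single (wlam c lam))).
  { intros lam Hl Hf w. rewrite single_eq.
    rewrite (What_eq_Wlam c lam (adm_Lamo c Hreg lam Hl) (root_ne lam Hl Hf) w).
    split.
    - intros Hw. apply Wlam_wlam; auto.
    - intros ->. apply wlam_in; auto. }
  split.
  - destruct (What_ne HS) as [w Hw]. apply HW in Hw. destruct Hw as [lam [Hl Hw]].
    pose proof (Wlam_wlam c Hreg lam w Hl Hw) as E.
    assert (Hf : fC c lam = 0).
    { rewrite <- Q_wlam; auto. rewrite <- E. apply Hw. }
    exists lam. split; [split; auto|]. intros l2 [Hl2 Hf2].
    destruct (Req_dec lam l2) as [|Hne]; auto. exfalso.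
    apply (NE c Hreg lam l2 HS (adm_Lamo c Hreg lam Hl) (adm_Lamo c Hreg l2 Hl2) Hne
       (root_ne lam Hl Hf) (wlam c l2)). apply wlam_in; auto.
  - intros lam Hl Hf. split; auto.
    rewrite <- Lst_wlam; auto. apply inf_of_min. apply (Wlam_What c lam).
    + apply adm_Lamo; auto.
    + apply wlam_in; auto.
Qed.

Lemma sing_one : singLag c -> set_eq (What c) (W1 c) ->
  0 <= - f1 c / gam c 1 /\
  infL c (/ (gam c 1) ^ 2 * ((lC c 0) ^ 2 +
       sumR (fun i => (lC c i) ^ 2 / (1 - gam c i / gam c 1) ^ 2) 2 (nq c)) + (zeta1 c) ^ 2) /\
  set_eq (What c) (fun w => single (v1 c 1) w \/ single (v1 c (-1)) w).
Proof.
  intros HS HW.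
  assert (Hne : nonempty (W1 c)).
  { destruct (What_ne HS) as [w Hw]. exists w. apply HW; auto. }
  destruct (W1_char c Hreg Hne) as [Hd [Hf Hc]].
  split; [|split]; auto.
  - rewrite <- Lst_v1; auto. apply inf_of_min. apply HW. apply v1_in; auto; ring.
  - intros w. split; intros H; [apply Hc, HW, H | apply HW, Hc, H].
Qed.

Lemma sing_q : singLag c -> gam c (nq c) < 0 -> set_eq (What c) (Wq c) ->
  0 <= fq c / (- gam c (nq c)) /\
  infL c (/ (gam c (nq c)) ^ 2 * ((lC c 0) ^ 2 +
       sumR (fun i => (lC c i) ^ 2 / (1 - gam c i / gam c (nq c)) ^ 2) 1 (nq c - 1))
     + (zetaq c) ^ 2) /\
  set_eq (What c) (fun w => single (vq c 1) w \/ single (vq c (-1)) w).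
Proof.
  intros HS Hq HW.
  assert (Hne : nonempty (Wq c)).
  { destruct (What_ne HS) as [w Hw]. exists w. apply HW; auto. }
  destruct (Wq_char c Hreg Hq Hne) as [Hd [Hf Hc]].
  split; [|split]; auto.
  - rewrite <- Lst_vq; auto. apply inf_of_min. apply HW. apply vq_in; auto; ring.
  - intros w. split; intros H; [apply Hc, HW, H | apply HW, Hc, H].
Qed.

End S.

Section S.
Variable c : CF.
Hypothesis Hreg : regular c.

Lemma zerov_Q : kst c = 0 -> Qst c zerov = 0.
Proof.
  intros Hk. unfold Qst, zerov. rewrite Hk.
  rewrite (sumR_ext _ (fun _ => 0)) by (intros; ring). rewrite sumR_zero. ring.
Qed.

Lemma zerov_inW : kst c = 0 -> inW c zerov.
Proof. intros Hk. split; [split; intros; reflexivity|]. apply zerov_Q; auto. Qed.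

Lemma Wlam_zero_del lam w : Wlam c lam w -> (forall i, inRange c i -> w i = 0) ->
  forall i, inRange c i -> del c i = 0.
Proof. intros Hw H0 i Hi. rewrite <- (Wlam_i c lam w Hw i Hi), H0; auto; ring. Qed.

Lemma partA : nonLag c ->
     emptyS (Wcirc c) /\ emptyS (W1 c) /\ set_eq (inW c) (single zerov) /\
     infL c (sumR (fun i => / (gam c i) ^ 2 * (lC c i) ^ 2) 1 (nq c)) /\
     0 < sumR (fun i => / (gam c i) ^ 2 * (lC c i) ^ 2) 1 (nq c) /\
     set_eq (What c) (single zerov).
Proof.
  intros [Hm [Hk [[j [Hj Hdj]] Hq]]].
  pose proof (eps_m0 c Hreg Hm) as He.
  assert (Hgp : forall i, inRange c i -> 0 < gam c i).
  { intros i Hi. pose proof (gam_geq c Hreg i Hi). lra. }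
  assert (HW : forall w, inW c w -> w = zerov).
  { intros w [[Hs0 Hs] Q]. unfold Qst in Q. rewrite He, Hk in Q.
    assert (HQ : sumR (fun i => gam c i * w i ^ 2) 1 (nq c) = 0) by lra.
    assert (Hnn : forall i, (1 <= i <= nq c)%nat -> 0 <= gam c i * w i ^ 2).
    { intros i Hi. apply Rmult_le_pos; [left; apply Hgp; unfold inRange; lia|apply pow2_ge_0]. }
    pose proof (sumR_nonneg_zero _ 1 (nq c) Hnn HQ) as Z.
    apply functional_extensionality. intros i. unfold zerov.
    destruct (Nat.eq_dec i 0) as [->|N0]; [apply Hs0; auto|].
    destruct (le_lt_dec i (nq c)); [|apply Hs; auto].
    assert (HR : inRange c i) by (unfold inRange; lia).
    specialize (Z i ltac:(unfold inRange in HR; lia)). simpl in Z.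
    pose proof (Hgp i HR).
    destruct (Rmult_integral _ _ Z) as [|Z2]; [lra|]. apply (pow_eq_zero_pow2 _ _) in Z2 || nra. }
  assert (HWz : inW c zerov) by (apply zerov_inW; auto).
  assert (Hempty : forall lam, emptyS (Wlam c lam)).
  { intros lam w Hw. pose proof (HW w (proj1 Hw)) as E. subst w.
    apply Hdj. apply (Wlam_zero_del lam zerov Hw); auto. }
  assert (HWhat : set_eq (What c) (single zerov)).
  { intros w. rewrite single_eq. split.
    - intros [Hw _]. apply HW; auto.
    - intros ->. split; auto. intros v Hv. rewrite (HW v Hv). lra. }
  assert (HL : Lst c zerov = sumR (fun i => / (gam c i) ^ 2 * (lC c i) ^ 2) 1 (nq c)).
  { rewrite Lst_split. unfold zerov. rewrite (sumR_ext _ (fun i => / gam c i ^ 2 * lC c i ^ 2)).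
    - ring.
    - intros i Hi. assert (HR : inRange c i) by (unfold inRange; lia). pose proof (Hgp i HR).
      unfold lC. destruct i; [lia|]. cbn [Nat.eqb]. rewrite Rabs_sq_mul. field. lra. }
  split; [|split; [|split; [|split; [|split]]]].
  - intros w [lam [_ Hw]]. apply (Hempty lam w Hw).
  - apply Hempty.
  - intros w. rewrite single_eq. split; [apply HW|intros ->; auto].
  - rewrite <- HL. apply inf_of_min. apply HWhat. intros i; reflexivity.
  - apply (sumR_pos _ 1 (nq c) j).
    + intros i Hi. apply Rmult_le_pos; [|apply pow2_ge_0]. left. apply Rinv_0_lt_compat.
      apply pow_lt. apply Hgp. unfold inRange; lia.
    + apply Hj.
    + pose proof (Hgp j Hj). pose proof (del_nn c Hreg j Hj).
      unfold lC. destruct j; [unfold inRange in Hj; lia|]. cbn [Nat.eqb]. rewrite Rabs_sq_mul.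
      replace (/ gam c (S j) ^ 2 * (gam c (S j) ^ 2 * del c (S j) ^ 2)) with (del c (S j) ^ 2)
        by (field; lra).
      apply pow_lt. lra.
  - exact HWhat.
Qed.

Lemma partB : multLag c ->
     infL c 0 /\ set_eq (What c) (single zerov) /\
     set_eq (Wcirc c) (single zerov) /\ set_eq (W1 c) (single zerov) /\
     (gam c (nq c) < 0 -> set_eq (Wq c) (single zerov)).
Proof.
  intros [Hm [Hk Hd]].
  pose proof (eps_m0 c Hreg Hm) as He.
  assert (HZ : forall lam, Wlam c lam zerov).
  { intros lam. apply Wlam_intro; auto.
    - apply zerov_inW; auto.
    - unfold zerov. rewrite He. ring.
    - intros i Hi. unfold zerov. rewrite Hd; auto. ring. }
  assert (Hw0 : wlam c 0 = zerov).
  { apply functional_extensionality. intros i. unfold zerov.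
    destruct (Nat.eq_dec i 0) as [->|N0]; [rewrite wlam_0; ring|].
    destruct (le_lt_dec i (nq c)); [|apply wlam_out; auto].
    rewrite wlam_i, Hd by (unfold inRange; lia). unfold Rdiv; ring. }
  assert (HWhat : set_eq (What c) (single zerov)).
  { intros w. rewrite single_eq. split.
    - intros Hw. rewrite <- Hw0. apply (Wlam_wlam c Hreg 0 w (Lamo_0 c Hreg)).
      apply (What_Wlam c 0 zerov); auto. apply adm_Lamo, Lamo_0; auto.
    - intros ->. apply (Wlam_What c 0); auto. apply adm_Lamo, Lamo_0; auto. }
  assert (HL : Lst c zerov = 0).
  { rewrite Lst_split. unfold zerov. rewrite (sumR_ext _ (fun _ => 0)).
    - rewrite sumR_zero. ring.
    - intros i Hi. rewrite Hd by (unfold inRange; lia). ring. }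
  assert (Hadm_set : forall lam, adm c lam -> set_eq (Wlam c lam) (single zerov)).
  { intros lam Ha w. split.
    - intros Hw. apply HWhat. apply (Wlam_What c lam); auto.
    - intros Hs. apply single_eq in Hs. subst w. auto. }
  split; [|split; [|split; [|split]]].
  - rewrite <- HL. apply inf_of_min. apply HWhat. intros i; reflexivity.
  - exact HWhat.
  - intros w. split.
    + intros [lam [Hl Hw]]. apply (Hadm_set lam (adm_Lamo c Hreg lam Hl)); auto.
    + intros Hs. exists 0. split; [apply Lamo_0; auto|]. apply (Hadm_set 0); auto.
      apply adm_Lamo, Lamo_0; auto.
  - apply Hadm_set, adm_1; auto.
  - intros Hq. apply Hadm_set, adm_q; auto.
Qed.

End S.

Theorem theorem8p1 (c : CF) (Hreg : regular c) :
  (* (a) non-Lagrangian *)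
  (nonLag c ->
     emptyS (Wcirc c) /\ emptyS (W1 c) /\ set_eq (inW c) (single zerov) /\
     infL c (sumR (fun i => / (gam c i) ^ 2 * (lC c i) ^ 2) 1 (nq c)) /\
     0 < sumR (fun i => / (gam c i) ^ 2 * (lC c i) ^ 2) 1 (nq c) /\
     set_eq (What c) (single zerov))
  /\
  (* (b) multiply-Lagrangian *)
  (multLag c ->
     infL c 0 /\ set_eq (What c) (single zerov) /\
     set_eq (Wcirc c) (single zerov) /\ set_eq (W1 c) (single zerov) /\
     (gam c (nq c) < 0 -> set_eq (Wq c) (single zerov)))
  /\
  (* (c) singly-Lagrangian *)
  (singLag c ->
     (* What is the unique nonempty member of {Wcirc, W1, Wq} *)
     ((nonempty (Wcirc c) /\ set_eq (What c) (Wcirc c) /\ emptyS (W1 c) /\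
         (gam c (nq c) < 0 -> emptyS (Wq c))) \/
      (emptyS (Wcirc c) /\ nonempty (W1 c) /\ set_eq (What c) (W1 c) /\
         (gam c (nq c) < 0 -> emptyS (Wq c))) \/
      (gam c (nq c) < 0 /\ emptyS (Wcirc c) /\ emptyS (W1 c) /\
         nonempty (Wq c) /\ set_eq (What c) (Wq c))) /\
     (0 < gam c (nq c) ->
        (exists lam, inLamo c lam /\ fC c lam < 0) /\
        ((exists lam, inLamo c lam /\ 0 < fC c lam) -> set_eq (What c) (Wcirc c)) /\
        ((forall lam, inLamo c lam -> fC c lam <= 0) -> set_eq (What c) (W1 c))) /\
     (gam c (nq c) < 0 ->
        ((exists lam, inLamo c lam /\ fC c lam < 0) /\
         (exists lam, inLamo c lam /\ 0 < fC c lam) -> set_eq (What c) (Wcirc c)) /\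
        ((forall lam, inLamo c lam -> fC c lam <= 0) -> set_eq (What c) (W1 c)) /\
        ((forall lam, inLamo c lam -> 0 <= fC c lam) -> set_eq (What c) (Wq c))) /\
     (set_eq (What c) (Wcirc c) ->
        (exists! lam, inLamo c lam /\ fC c lam = 0) /\
        (forall lam, inLamo c lam -> fC c lam = 0 ->
           infL c (lam ^ 2 * ((lC c 0) ^ 2 +
             sumR (fun i => (lC c i) ^ 2 / (1 - lam * gam c i) ^ 2) 1 (nq c))) /\
           set_eq (What c) (single (wlam c lam)))) /\
     (set_eq (What c) (W1 c) ->
        0 <= - f1 c / gam c 1 /\
        infL c (/ (gam c 1) ^ 2 * ((lC c 0) ^ 2 +
             sumR (fun i => (lC c i) ^ 2 / (1 - gam c i / gam c 1) ^ 2) 2 (nq c))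
           + (zeta1 c) ^ 2) /\
        set_eq (What c) (fun w => single (v1 c 1) w \/ single (v1 c (-1)) w)) /\
     (gam c (nq c) < 0 -> set_eq (What c) (Wq c) ->
        0 <= fq c / (- gam c (nq c)) /\
        infL c (/ (gam c (nq c)) ^ 2 * ((lC c 0) ^ 2 +
             sumR (fun i => (lC c i) ^ 2 / (1 - gam c i / gam c (nq c)) ^ 2) 1 (nq c - 1))
           + (zetaq c) ^ 2) /\
        set_eq (What c) (fun w => single (vq c 1) w \/ single (vq c (-1)) w))).
Proof.
  split; [apply partA; auto|]. split; [apply partB; auto|].
  intros HS.
  assert (Hcirc : forall lam, inLamo c lam -> fC c lam = 0 -> set_eq (What c) (Wcirc c)).
  { intros lam Hl Hf. apply (Wcirc_of c Hreg lam); auto. apply root_ne; auto. }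
  split; [|split; [|split; [|split; [|split]]]].
  - destruct (exist_main c Hreg HS) as [[lam [Hl Hf]]|[Hne|[Hq Hne]]].
    + left. apply (circ_case c Hreg lam); auto. apply root_ne; auto.
    + right; left. apply one_case; auto.
    + right; right. apply q_case; auto.
  - intros Hq. destruct (E1neg c Hreg HS Hq) as [l1 [Hl1 Hf1]].
    split; [|split].
    + eauto.
    + intros [l2 [Hl2 Hf2]]. destruct (IVT_root c Hreg l1 l2) as [lam [Hl Hf]]; auto.
      apply (Hcirc lam); auto.
    + intros Hle. apply What_eq_Wlam; [apply adm_1; auto|]. apply E3lim; auto.
  - intros Hq. split; [|split].
    + intros [[l1 [Hl1 Hf1]] [l2 [Hl2 Hf2]]].
      destruct (IVT_root c Hreg l1 l2) as [lam [Hl Hf]]; auto. apply (Hcirc lam); auto.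
    + intros Hle. apply What_eq_Wlam; [apply adm_1; auto|]. apply E3lim; auto.
    + intros Hge. apply What_eq_Wlam; [apply adm_q; auto|]. apply E4lim; auto.
  - apply sing_circ; auto.
  - apply sing_one; auto.
  - intros Hq. apply sing_q; auto.
Qed.
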